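(* (i) Let $f\colon M^{12}\to\mathbb{S}^{13}$ be the minimal Cartan isoparametric hypersurface with $g=3$ distinct principal curvatures, each of multiplicity $4$. Then $f$ satisfies, for every unit tangent vector $X$, $\mathrm{Ric}_M(X)\geq b(12,k,H)$ only for integers $2\leq k\leq 3$; for $k=3$ the inequality holds with equality (attained for some unit vectors), $\lambda(12,3,0)=\sqrt3$ is a principal curvature of multiplicity $4$, and the second fundamental form has the following structure: at every point there is a Dupin principal normal $\eta$ of multiplicity $4$ with $\|\eta\|=\lambda(12,3,0)$ and $\mathrm{Ric}_M(X)=b(12,3,0)$ for every unit $X\in E_\eta$. (ii) Let $f\colon M^{24}\to\mathbb{S}^{25}$ be the minimal Cartan isoparametric hypersurface with $g=3$ distinct principal curvatures, each of multiplicity $8$. Then $f$ satisfies $\mathrm{Ric}_M\geq b(24,k,H)$ only for integers $2\leq k\leq 6$; for $k=6$ with equality, $\lambda(24,6,0)=\sqrt3$ is a principal curvature of multiplicity $8$, and at every point there is a Dupin principal normal $\eta$ of multiplicity $8$ with $\|\eta\|=\lambda(24,6,0)$ and $\mathrm{Ric}_M(X)=b(24,6,0)$ for every unit $X\in E_\eta$.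
   Context: An isoparametric hypersurface of the unit sphere with $g=3$ (Cartan hypersurface) has principal curvatures $\cot\theta,\ \cot(\theta+\pi/3),\ \cot(\theta+2\pi/3)$ for some $\theta\in(0,\pi/2)$, all with the same multiplicity; the minimal one in the family has principal curvatures $\sqrt3,0,-\sqrt3$. Notation: $b(n,k,H)=\frac{n(k-1)}{k}+\frac{n(k-1)H}{2k^2}\big(nH+\sqrt{n^2H^2+4k(n-k)}\big)$, $\lambda(n,k,H)=\frac{1}{2k}\big(nH+\sqrt{n^2H^2+4k(n-k)}\big)$, $H$ the length of the normalized mean curvature vector, $\mathrm{Ric}_M(X)$ the non-normalized Ricci curvature in the unit direction $X$. A Dupin principal normal $\eta$ at $x$ is a normal vector for which $E_\eta(x)=\{X:\alpha_f(X,Y)=\langle X,Y\rangle\eta\ \forall Y\}$ has dimension $\geq 2$ (its multiplicity), $\alpha_f$ the second fundamental form; for a hypersurface this means $\eta=\rho\xi$ with $\rho$ a principal curvature of multiplicity $\geq2$ w.r.t. the unit normal $\xi$. *)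

(* Defs.v *)
(* Pointwise (linear-algebraic) model of a hypersurface of the
   unit sphere: at each point p the tangent space is identified isometrically
   with R^n (row vectors, standard inner product) via an orthonormal frame, and
   the second fundamental form is alpha(X,Y) = <A X, Y> xi for the shape
   operator A (symmetric) w.r.t. a unit normal xi.  Normal vectors rho xi are
   represented by the scalar rho. *)
From HB Require Import structures.
From mathcomp Require Import all_boot all_order all_algebra.
Set Implicit Arguments. Unset Strict Implicit. Unset Printing Implicit Defensive.
Import Order.TTheory GRing.Theory Num.Theory.
Local Open Scope ring_scope.

Section Defs.
Variables (R : rcfType) (n : nat).

Definition inner (u v : 'rV[R]_n) : R := (u *m v^T) 0 0.

Definition unit_vec (X : 'rV[R]_n) : Prop := inner X X = 1.

Definition sff (A : 'M[R]_n) (X Y : 'rV[R]_n) : R := inner (X *m A) Y.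

(* Riemann curvature tensor R(X,Y,Z,W) of M, given by the Gauss equation for a
   submanifold of the unit sphere (ambient curvature 1) *)
Definition curv (A : 'M[R]_n) (X Y Z W : 'rV[R]_n) : R :=
  inner X W * inner Y Z - inner X Z * inner Y W
  + sff A X W * sff A Y Z - sff A X Z * sff A Y W.

(* non-normalized Ricci curvature in direction X (orthonormal frame e_i) *)
Definition Ric (A : 'M[R]_n) (X : 'rV[R]_n) : R :=
  \sum_(i < n) curv A (delta_mx 0 i) X X (delta_mx 0 i).

(* length of the normalized mean curvature vector (1/n) tr(alpha) *)
Definition meanH (A : 'M[R]_n) : R := `|\tr A| / n%:R.

Definition subspace_dim (P : 'rV[R]_n -> Prop) (d : nat) : Prop :=
  exists B : 'M[R]_(d, n), row_free B /\ forall x, P x <-> (x <= B)%MS.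

Definition principal (A : 'M[R]_n) (rho : R) (X : 'rV[R]_n) : Prop :=
  X *m A = rho *: X.

Definition dupinE (A : 'M[R]_n) (rho : R) (X : 'rV[R]_n) : Prop :=
  forall Y : 'rV[R]_n, sff A X Y = inner X Y * rho.

Definition minimal_cartan_shape (m : nat) (A : 'M[R]_n) : Prop :=
  A^T = A /\
  subspace_dim (principal A (Num.sqrt 3)) m /\
  subspace_dim (principal A 0) m /\
  subspace_dim (principal A (- Num.sqrt 3)) m.

End Defs.

Definition bnd {R : rcfType} (n k : nat) (H : R) : R :=
  n%:R * (k%:R - 1) / k%:R
  + n%:R * (k%:R - 1) * H / (2 * k%:R ^+ 2)
    * (n%:R * H + Num.sqrt (n%:R ^+ 2 * H ^+ 2 + 4 * k%:R * (n%:R - k%:R))).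

Definition lambda {R : rcfType} (n k : nat) (H : R) : R :=
  (n%:R * H + Num.sqrt (n%:R ^+ 2 * H ^+ 2 + 4 * k%:R * (n%:R - k%:R))) / (2 * k%:R).

(* Main.v *)
Require Import Defs.
From HB Require Import structures.
From mathcomp Require Import all_boot all_order all_algebra.
From mathcomp Require Import ring lra.
Set Implicit Arguments. Unset Strict Implicit. Unset Printing Implicit Defensive.
Import Order.TTheory GRing.Theory Num.Theory.
Local Open Scope ring_scope.
From mathcomp Require Import zify.

Section Inner.
Variables (R : rcfType) (n : nat).
Implicit Types (u v w : 'rV[R]_n).

Lemma innerE u v : inner u v = \sum_j u 0 j * v 0 j.
Proof. by rewrite /inner !mxE; apply: eq_bigr => j _; rewrite mxE. Qed.

Lemma innerC u v : inner u v = inner v u.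
Proof. by rewrite !innerE; apply: eq_bigr => j _; rewrite mulrC. Qed.

Lemma innerDl u v w : inner (u + v) w = inner u w + inner v w.
Proof. by rewrite !innerE -big_split; apply: eq_bigr => j _; rewrite mxE mulrDl. Qed.

Lemma innerZl a u v : inner (a *: u) v = a * inner u v.
Proof. by rewrite !innerE mulr_sumr; apply: eq_bigr => j _; rewrite mxE mulrA. Qed.

Lemma innerDr u v w : inner u (v + w) = inner u v + inner u w.
Proof. by rewrite innerC innerDl !(innerC u). Qed.

Lemma innerZr a u v : inner u (a *: v) = a * inner u v.
Proof. by rewrite innerC innerZl innerC. Qed.

Lemma inner0l v : inner 0 v = 0.
Proof. by rewrite innerE big1 // => j _; rewrite mxE mul0r. Qed.

Lemma inner_ge0 v : 0 <= inner v v.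
Proof. by rewrite innerE sumr_ge0 // => j _; rewrite -expr2 sqr_ge0. Qed.

Lemma inner_eq0 v : inner v v = 0 -> v = 0.
Proof.
rewrite innerE => /psumr_eq0P H.
have {}H : forall j, v 0 j * v 0 j = 0.
  by move=> j; apply: H => // k _; rewrite -expr2 sqr_ge0.
apply/matrixP => i j; rewrite (ord1 i) mxE.
by have /eqP := H j; rewrite mulf_eq0 orbb => /eqP.
Qed.

Lemma inner_delta_r u i : inner u (delta_mx 0 i) = u 0 i.
Proof.
rewrite innerE (bigD1 i) //= big1 => [|j /negbTE ji]; rewrite mxE ?eqxx ?ji /=.
  by rewrite mulr1 addr0.
by rewrite mulr0.
Qed.

Lemma inner_mulr u v (M : 'M[R]_n) : inner (u *m M) v = inner u (v *m M^T).
Proof. by rewrite /inner trmx_mul trmxK mulmxA. Qed.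

Lemma RicE (A : 'M[R]_n) X : A^T = A ->
  Ric A X = n%:R * inner X X - inner X X + \tr A * sff A X X
            - inner (X *m A) (X *m A).
Proof.
move=> sA; rewrite /Ric /curv /sff.
under eq_bigr => i _ do rewrite (innerC (delta_mx 0 i) X) (inner_mulr (delta_mx 0 i) X) sA
   (innerC (delta_mx 0 i) (X *m A)) !inner_delta_r -rowE !mxE eqxx /=.
rewrite !sumrB !big_split /= sumrN.
under eq_bigr do rewrite eqxx mul1r.
rewrite sumr_const card_ord -mulr_suml /mxtrace.
rewrite (innerE X X) (innerE (X *m A) (X *m A)).
rewrite mulr_natl; congr (_ - _).
by apply: eq_bigr => i _; rewrite !mxE.
Qed.

Lemma inner_orth (A : 'M[R]_n) a b x y : A^T = A -> a != b ->
  principal A a x -> principal A b y -> inner x y = 0.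
Proof.
move=> sA ab hx hy.
have : a * inner x y = b * inner x y.
  by rewrite -innerZl -hx inner_mulr sA hy innerZr.
by move/eqP; rewrite -subr_eq0 -mulrBl mulf_eq0 subr_eq0 (negbTE ab) /=; move/eqP.
Qed.

Lemma dupinP (A : 'M[R]_n) rho X : dupinE A rho X <-> principal A rho X.
Proof.
rewrite /dupinE /principal /sff; split; last first.
  by move=> H Y; rewrite H innerZl mulrC.
move=> H.
apply/matrixP => i j; rewrite (ord1 i) [RHS]mxE.
by have := H (delta_mx 0 j); rewrite !inner_delta_r mulrC.
Qed.

End Inner.

Section Main.
Variables (R : rcfType) (m : nat).
Local Notation n := (m + (m + m))%N.
Variables (A : 'M[R]_n) (HA : minimal_cartan_shape m A).
Local Notation s := (Num.sqrt (3 : R)).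

Lemma s_gt0 : 0 < s. Proof. by rewrite sqrtr_gt0 ltr0n. Qed.
Lemma ss : s * s = 3. Proof. by rewrite -expr2 sqr_sqrtr // ler0n. Qed.

Lemma sA : A^T = A. Proof. by case: HA. Qed.

Lemma eigB (B : 'M[R]_(m, n)) a :
  (forall x, principal A a x <-> (x <= B)%MS) -> B *m A = a *: B.
Proof.
move=> H; apply/eigenspaceP; apply/row_subP => i; apply/eigenspaceP.
by apply/H; exact: row_sub.
Qed.

Lemma sub_col (B2 B3 : 'M[R]_(m, n)) (v : 'rV_n) : (v <= col_mx B2 B3)%MS ->
  exists w2 w3, v = w2 *m B2 + w3 *m B3.
Proof.
case/submxP => u ->; exists (lsubmx u), (rsubmx u).
by rewrite -mul_row_col hsubmxK.
Qed.

Lemma decomp : exists B1 B2 B3 : 'M[R]_(m, n),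
  [/\ forall x, principal A s x <-> (x <= B1)%MS,
      forall x, principal A 0 x <-> (x <= B2)%MS,
      forall x, principal A (- s) x <-> (x <= B3)%MS,
      [/\ row_free B1, row_free B2 & row_free B3] &
      col_mx B1 (col_mx B2 B3) \in unitmx].
Proof.
case: HA => _ [[B1 [f1 e1]] [[B2 [f2 e2]] [B3 [f3 e3]]]].
exists B1, B2, B3; split => //.

have sn0 : s != 0 by rewrite gt_eqF // s_gt0.
have d12 : s != 0 by [].
have d13 : s != - s by rewrite -subr_eq0 opprK -mulr2n mulrn_eq0 negb_or sn0.
have d23 : (0 : R) != - s by rewrite eq_sym oppr_eq0.
have cap23 : (B2 :&: B3)%MS = 0.
  apply/eqP/rowV0P => v; rewrite sub_capmx => /andP [/e2 h2 /e3 h3].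
  apply: inner_eq0; exact: (inner_orth sA d23 h2 h3).
have cap1 : (B1 :&: col_mx B2 B3)%MS = 0.
  apply/eqP/rowV0P => v; rewrite sub_capmx => /andP [/e1 h1 /sub_col [w2 [w3 ev]]].
  apply: inner_eq0; rewrite {2}ev innerDr.
  rewrite (inner_orth sA d12 h1 (_ : principal A 0 (w2 *m B2))); last by apply/e2; exact: submxMl.
  rewrite (inner_orth sA d13 h1 (_ : principal A (-s) (w3 *m B3))); last by apply/e3; exact: submxMl.
  by rewrite addr0.
have rk23 : \rank (col_mx B2 B3) = (m + m)%N.
  rewrite -(addsmxE B2 B3).1.
  have := mxrank_sum_cap B2 B3; rewrite cap23 mxrank0 addn0 => ->.
  by rewrite (eqP f2) (eqP f3).
rewrite -row_free_unit /row_free -(addsmxE B1 (col_mx B2 B3)).1.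
have := mxrank_sum_cap B1 (col_mx B2 B3); rewrite cap1 mxrank0 addn0 => ->.
by rewrite rk23 (eqP f1).
Qed.


Lemma trace0 : \tr A = 0.
Proof.
have [B1 [B2 [B3 [e1 e2 e3 _ uP]]]] := decomp.
set P := col_mx B1 (col_mx B2 B3).
pose D : 'M[R]_n := block_mx (s%:M) 0 0 (block_mx 0 0 0 (- s)%:M).
have PA : P *m A = D *m P.
  rewrite /P !mul_col_mx (eigB e1) (eigB e2) (eigB e3) /D.
  by rewrite !(mul_row_col, mul_col_mx, mul0mx, mul_scalar_mx, addr0, add0r, scale0r).
have -> : A = invmx P *m (D *m P) by rewrite -PA mulKmx.
rewrite mxtrace_mulC -mulmxA mulmxV // mulmx1 /D !mxtrace_block !mxtrace_scalar mxtrace0.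
by rewrite add0r mulNrn subrr.
Qed.

Lemma meanH0 : meanH A = 0.
Proof. by rewrite /meanH trace0 normr0 mul0r. Qed.

Lemma RicE0 X : unit_vec X -> Ric A X = n%:R - 1 - inner (X *m A) (X *m A).
Proof. by move=> uX; rewrite RicE ?sA // trace0 mul0r addr0 uX mulr1. Qed.

Lemma Ric_ge X : unit_vec X -> n%:R - 4 <= Ric A X.
Proof.
move=> uX; rewrite RicE0 //.
have [B1 [B2 [B3 [e1 e2 e3 _ uP]]]] := decomp.
set P := col_mx B1 (col_mx B2 B3).
have eX : X = (X *m invmx P) *m P by rewrite mulmxKV.
set w := X *m invmx P in eX.
move: eX; rewrite -(hsubmxK w) -(hsubmxK (rsubmx w)) /P !mul_row_col.
set X1 := _ *m B1; set X2 := _ *m B2; set X3 := _ *m B3 => eX.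
have h1 : principal A s X1 by apply/e1; exact: submxMl.
have h2 : principal A 0 X2 by apply/e2; exact: submxMl.
have h3 : principal A (-s) X3 by apply/e3; exact: submxMl.
have sn0 : s != 0 by rewrite gt_eqF // s_gt0.
have d12 : s != 0 by [].
have d13 : s != - s by rewrite -subr_eq0 opprK -mulr2n mulrn_eq0 negb_or sn0.
have d23 : (0 : R) != - s by rewrite eq_sym oppr_eq0.
have o12 := inner_orth sA d12 h1 h2.
have o13 := inner_orth sA d13 h1 h3.
have o23 := inner_orth sA d23 h2 h3.
have o21 : inner X2 X1 = 0 by rewrite innerC.
have o31 : inner X3 X1 = 0 by rewrite innerC.
have o32 : inner X3 X2 = 0 by rewrite innerC.
have XA : X *m A = s *: X1 + (- s) *: X3.
  by rewrite eX !mulmxDl h1 h2 h3 scale0r add0r.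
have g2 := inner_ge0 X2.
move: uX; rewrite /unit_vec XA eX.
rewrite !innerDl !innerDr !innerZl !innerZr o12 o13 o23 o21 o31 o32 !mulr0 !addr0 !add0r.
rewrite !mulrA !mulrN !mulNr ss opprK => h.
lra.
Qed.


Lemma Ric_eig X : principal A s X -> unit_vec X -> Ric A X = n%:R - 4.
Proof.
move=> h uX; rewrite RicE0 // h innerZl innerZr uX mulr1 ss.
by rewrite -addrA -opprD.
Qed.

Lemma exists_unit : (0 < m)%N -> exists X, principal A s X /\ unit_vec X.
Proof.
move=> m0.
have [B1 [B2 [B3 [e1 e2 e3 [f1 _ _] uP]]]] := decomp.
pose i0 : 'I_m := Ordinal m0.
pose v := row i0 B1.
have v0 : v != 0.
  apply/eqP => hv; have : (delta_mx 0 i0 : 'rV_m) *m B1 = 0 *m B1 by rewrite -rowE mul0mx.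
  move/(row_free_inj f1)/matrixP => /(_ 0 i0); rewrite !mxE !eqxx /=.
  by move/eqP; rewrite oner_eq0.
have vp : 0 < inner v v.
  rewrite lt_def inner_ge0 andbT; apply/eqP => h; move/eqP: v0; apply; exact: inner_eq0.
set c := Num.sqrt (inner v v).
have c0 : 0 < c by rewrite sqrtr_gt0.
have cc : c * c = inner v v by rewrite -expr2 sqr_sqrtr // ltW.
exists (c^-1 *: v); split.
  by apply/e1; rewrite scalemx_sub // row_sub.
rewrite /unit_vec innerZl innerZr -cc.
have cn : c != 0 by rewrite gt_eqF.
by field.
Qed.

End Main.

Lemma bnd0 (R : rcfType) n k : bnd n k (0 : R) = n%:R * (k%:R - 1) / k%:R.
Proof. by rewrite /bnd !mulr0 !mul0r addr0. Qed.

Lemma bnd_le (R : rcfType) n k : (0 < k)%N ->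
  (n%:R * (k%:R - 1) / k%:R <= n%:R - 4 :> R) = (4 * k <= n)%N.
Proof.
move=> k0; have kp : 0 < k%:R :> R by rewrite ltr0n.
rewrite ler_pdivrMr // -(ler_nat R) natrM.
apply/idP/idP => h; nra.
Qed.

Lemma gen (R : rcfType) (m : nat) (M : Type) (A : M -> 'M[R]_(m + (m + m))) :
  (0 < m)%N -> inhabited M -> (forall p, minimal_cartan_shape m (A p)) ->
  (forall k, (0 < k)%N ->
     ((forall p X, unit_vec X -> bnd (m + (m + m)) k (meanH (A p)) <= Ric (A p) X)
      <-> (4 * k <= m + (m + m))%N))
  /\ (exists p X, unit_vec X /\ Ric (A p) X = (m + (m + m))%:R - 4 /\ meanH (A p) = 0)
  /\ (forall p, subspace_dim (principal (A p) (Num.sqrt 3)) m)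
  /\ (forall p, exists rho : R, subspace_dim (dupinE (A p) rho) m /\ `|rho| = Num.sqrt 3
        /\ (forall X, dupinE (A p) rho X -> unit_vec X -> Ric (A p) X = (m + (m + m))%:R - 4)).
Proof.
move=> m0 [p0] HA.
have [X0 [hX0 uX0]] := exists_unit (HA p0) m0.
split.
  move=> k k0; rewrite -(bnd_le R _ k0); split.
    move=> /(_ p0 X0 uX0); rewrite meanH0 // bnd0 Ric_eig //.
  move=> h p X uX; rewrite meanH0 // bnd0; apply: le_trans h _; exact: Ric_ge.
split.
  by exists p0, X0; rewrite Ric_eig // meanH0.
split.
  by move=> p; case: (HA p) => _ [].
move=> p; exists (Num.sqrt 3); split.
  case: (HA p) => _ [[B [f e]] _]; exists B; split => // x.
  by rewrite dupinP.
split; first by rewrite ger0_norm // sqrtr_ge0.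
by move=> X /dupinP h uX; rewrite Ric_eig.
Qed.

Lemma lam (R : rcfType) (a k : nat) (c : R) : (0 < k)%N -> 0 <= c ->
  4%:R * k%:R * (a%:R - k%:R) = c ^+ 2 * 3 -> c = 2 * k%:R ->
  lambda a k (0 : R) = Num.sqrt 3.
Proof.
move=> k0 c0 e ck; rewrite /lambda !mulr0 expr0n /= mulr0 add0r e.
rewrite add0r sqrtrM ?sqr_ge0 // sqrtr_sqr ger0_norm // -ck mulrC mulKf //.
by rewrite ck mulf_neq0 // ?pnatr_eq0 -?lt0n.
Qed.

Theorem proposition9 :
  (forall (R : rcfType) (M : Type) (A : M -> 'M[R]_12),
     inhabited M ->
     (forall p, minimal_cartan_shape 4 (A p)) ->
     (forall k : nat, (2 <= k <= 12)%N ->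
        ((forall p X, unit_vec X -> bnd 12 k (meanH (A p)) <= Ric (A p) X)
         <-> (k <= 3)%N))
     /\ (exists p X, unit_vec X /\ Ric (A p) X = bnd 12 3 (meanH (A p)))
     /\ lambda 12 3 (0 : R) = Num.sqrt 3
     /\ (forall p, subspace_dim (principal (A p) (lambda 12 3 0)) 4)
     /\ (forall p, exists rho : R,
           subspace_dim (dupinE (A p) rho) 4
           /\ `|rho| = lambda 12 3 0
           /\ (forall X, dupinE (A p) rho X -> unit_vec X ->
                 Ric (A p) X = bnd 12 3 0)))
  /\
  (forall (R : rcfType) (M : Type) (A : M -> 'M[R]_24),
     inhabited M ->
     (forall p, minimal_cartan_shape 8 (A p)) ->
     (forall k : nat, (2 <= k <= 24)%N ->
        ((forall p X, unit_vec X -> bnd 24 k (meanH (A p)) <= Ric (A p) X)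
         <-> (k <= 6)%N))
     /\ (exists p X, unit_vec X /\ Ric (A p) X = bnd 24 6 (meanH (A p)))
     /\ lambda 24 6 (0 : R) = Num.sqrt 3
     /\ (forall p, subspace_dim (principal (A p) (lambda 24 6 0)) 8)
     /\ (forall p, exists rho : R,
           subspace_dim (dupinE (A p) rho) 8
           /\ `|rho| = lambda 24 6 0
           /\ (forall X, dupinE (A p) rho X -> unit_vec X ->
                 Ric (A p) X = bnd 24 6 0))).
Proof.
split.
- move=> R M A inh H.
  have [hk [[p [X [uX [hR hm]]]] [hP hD]]] := gen (m := 4) (A := A) isT inh H.
  have l : lambda 12 3 (0 : R) = Num.sqrt 3.
    by apply: (lam (c := 6)) => //; ring.
  have b : bnd 12 3 (0 : R) = 12%:R - 4 by rewrite bnd0; field.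
  split.
    move=> k /andP [k2 k12]; have k0 : (0 < k)%N by lia.
    apply: (iff_trans (hk k k0)); split => h; lia.
  split; first by exists p, X; rewrite hR hm b.
  split; first exact: l.
  split; first by move=> q; rewrite l.
  move=> q; have [rho [h1 [h2 h3]]] := hD q; exists rho; rewrite l b.
  by split => //; split => // X' hx ux; rewrite h3.
- move=> R M A inh H.
  have [hk [[p [X [uX [hR hm]]]] [hP hD]]] := gen (m := 8) (A := A) isT inh H.
  have l : lambda 24 6 (0 : R) = Num.sqrt 3.
    by apply: (lam (c := 12)) => //; ring.
  have b : bnd 24 6 (0 : R) = 24%:R - 4 by rewrite bnd0; field.
  split.
    move=> k /andP [k2 k12]; have k0 : (0 < k)%N by lia.
    apply: (iff_trans (hk k k0)); split => h; lia.
  split; first by exists p, X; rewrite hR hm b.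
  split; first exact: l.
  split; first by move=> q; rewrite l.
  move=> q; have [rho [h1 [h2 h3]]] := hD q; exists rho; rewrite l b.
  by split => //; split => // X' hx ux; rewrite h3.
Qed.
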